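(* Let $S$ be a closed subspace of $\ell_\infty$ with $c_0\subseteq S$ such that the quotient $\ell_\infty/S$ is separable. Then $S$ is an $\ell_\infty$-Grothendieck subspace.
   Context: Let $S$ be a closed subspace of $\ell_\infty$ containing $c_0$ and let $j:c_0\to S$ be the inclusion map. Then $j^{**}:c_0^{**}\equiv\ell_\infty\to S^{**}$ identifies $\ell_\infty$ with a subspace of $S^{**}$ containing $S$. A sequence $(x_n^* )$ in $S^*$ is said to be $\sigma(S^*,\ell_\infty)$-convergent to $x^*\in S^*$ if $\langle j^{**}z,x_n^*\rangle\to\langle j^{**}z,x^*\rangle$ for every $z\in\ell_\infty$ (equivalently, the restrictions $j^*x_n^*\in\ell_1$ converge to $j^*x^*$ in the topology $\sigma(\ell_1,\ell_\infty)$). The closed subspace $S$ of $\ell_\infty$ is called an $\ell_\infty$-Grothendieck subspace if $c_0\subseteq S$ and every $\sigma(S^*,S)$-convergent (weak$^*$-convergent) sequence in $S^*$ is $\sigma(S^*,\ell_\infty)$-convergent (to the same limit). *)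

(* Defs.v *)
From HB Require Import structures.
From mathcomp Require Import all_boot all_order all_algebra.
From mathcomp Require Import all_classical all_reals all_analysis.
Set Implicit Arguments. Unset Strict Implicit. Unset Printing Implicit Defensive.
Import Order.TTheory GRing.Theory Num.Theory numFieldNormedType.Exports.
Local Open Scope classical_set_scope.
Local Open Scope ring_scope.

Section Defs.
Variable R : realType.

Definition linf : set (nat -> R) := [set x | exists M : R, forall n, `|x n| <= M].

Definition c0 : set (nat -> R) := [set x | x @ \oo --> (0 : R)].

Definition closed_subspace_linf (S : set (nat -> R)) : Prop :=
  [/\ S `<=` linf,
      S (fun _ => 0),
      (forall a (s t : nat -> R), S s -> S t -> S (fun n => a * s n + t n)) &
      (forall x, linf x ->
         (forall e : R, 0 < e -> exists2 s, S s & forall n, `|x n - s n| <= e) ->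
         S x)].

(* x^* is an element of S^*: a bounded linear functional on S
   (its values outside S are irrelevant) *)
Definition dual_elem (S : set (nat -> R)) (f : (nat -> R) -> R) : Prop :=
  (forall a (s t : nat -> R), S s -> S t ->
      f (fun n => a * s n + t n) = a * f s + f t) /\
  (exists C : R, forall s, S s -> forall M : R, (forall n, `|s n| <= M) ->
      `|f s| <= C * M).

Definition unit_vec (k : nat) : nat -> R := fun n => if n == k then 1 else 0.

(* <j** z, x^*> = <z, j^* x^*>, where j^* x^* in ell_1 = c_0^* is identified
   with the sequence (x^*(e_k))_k *)
Definition pair_linf (z : nat -> R) (f : (nat -> R) -> R) : R :=
  limn (series (fun k => z k * f (unit_vec k))).

Definition weak_star_cvg (S : set (nat -> R))
    (xs : nat -> (nat -> R) -> R) (x : (nat -> R) -> R) : Prop :=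
  forall s, S s -> (fun n => xs n s) @ \oo --> x s.

Definition sigma_linf_cvg
    (xs : nat -> (nat -> R) -> R) (x : (nat -> R) -> R) : Prop :=
  forall z, linf z -> (fun n => pair_linf z (xs n)) @ \oo --> pair_linf z x.

Definition linf_grothendieck (S : set (nat -> R)) : Prop :=
  closed_subspace_linf S /\ (forall x, c0 x -> S x) /\
  forall (xs : nat -> (nat -> R) -> R) (x : (nat -> R) -> R),
    (forall n, dual_elem S (xs n)) -> dual_elem S x ->
    weak_star_cvg S xs x -> sigma_linf_cvg xs x.

(* ell_infinity / S is separable (quotient norm): there is a countable D in
   ell_infinity whose classes are dense in the quotient *)
Definition quotient_separable (S : set (nat -> R)) : Prop :=
  exists D : set (nat -> R), countable D /\ D `<=` linf /\
    forall x, linf x -> forall e : R, 0 < e ->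
      exists d, D d /\ exists2 s, S s & forall n, `|x n - d n - s n| <= e.

End Defs.

(* Main.v *)
Require Import Defs.
From HB Require Import structures.
From mathcomp Require Import all_boot all_order all_algebra.
From mathcomp Require Import all_classical all_reals all_analysis.
From mathcomp Require Import ring lra.
Set Implicit Arguments. Unset Strict Implicit. Unset Printing Implicit Defensive.
Import Order.TTheory GRing.Theory Num.Theory numFieldNormedType.Exports.
Local Open Scope classical_set_scope.
Local Open Scope ring_scope.

Section Basics.
Variable R : realType.
Variable S : set (nat -> R).
Hypothesis hS : closed_subspace_linf S.
Hypothesis hc0 : forall x, c0 x -> S x.

Definition bnd (s : nat -> R) (M : R) := forall k, `|s k| <= M.
Definition lin (f : (nat -> R) -> R) := forall a (s t : nat -> R), S s -> S t ->
      f (fun n => a * s n + t n) = a * f s + f t.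

Lemma S0 : S (fun _ => 0).
Proof. by case: hS. Qed.

Lemma Slin a s t : S s -> S t -> S (fun n => a * s n + t n).
Proof. by case: hS => _ _ H _; apply: H. Qed.

Lemma Sadd s t : S s -> S t -> S (fun n => s n + t n).
Proof.
move=> Ss St; have := Slin 1 Ss St.
by congr S; apply/funext => n; rewrite mul1r.
Qed.

Lemma Sscale a s : S s -> S (fun n => a * s n).
Proof.
move=> Ss; have := Slin a Ss S0.
by congr S; apply/funext => n; rewrite addr0.
Qed.

Lemma Ssub s t : S s -> S t -> S (fun n => s n - t n).
Proof.
move=> Ss St; have := Slin (-1) St Ss.
by congr S; apply/funext => n; rewrite mulN1r addrC.
Qed.

Lemma Sext s t : S s -> (forall n, s n = t n) -> S t.
Proof. by move=> Ss /funext <-. Qed.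

Lemma finsupp_c0 (v : nat -> R) L : (forall k, (L <= k)%N -> v k = 0) -> c0 v.
Proof.
move=> H; rewrite /c0 /=; apply: cvg_near_cst.
by exists L => // n /= hn; apply: H.
Qed.

Lemma finsupp_S (v : nat -> R) L : (forall k, (L <= k)%N -> v k = 0) -> S v.
Proof. by move=> H; apply: hc0; apply: finsupp_c0 H. Qed.

Lemma unit_vec_S k : S (unit_vec R k).
Proof.
apply: (@finsupp_S _ k.+1) => n hn; rewrite /unit_vec.
by case: eqP => // E; move: hn; rewrite E ltnn.
Qed.

Lemma lin0 f : lin f -> f (fun _ => 0) = 0.
Proof.
move=> hf; have := hf 1 _ _ S0 S0.
have -> : (fun n : nat => 1 * (0:R) + 0) = (fun _ => 0).
  by apply/funext => n; rewrite mul1r addr0.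
by rewrite mul1r => E; lra.
Qed.

Lemma linD f s t : lin f -> S s -> S t -> f (fun n => s n + t n) = f s + f t.
Proof.
move=> hf Ss St; rewrite -[f s]mul1r -hf //.
by congr f; apply/funext => n; rewrite mul1r.
Qed.

Lemma linZ f a s : lin f -> S s -> f (fun n => a * s n) = a * f s.
Proof.
move=> hf Ss; rewrite -[a * f s]addr0 -(lin0 hf) -hf //; last exact: S0.
by congr f; apply/funext => n; rewrite addr0.
Qed.

Lemma linB f s t : lin f -> S s -> S t -> f (fun n => s n - t n) = f s - f t.
Proof.
move=> hf Ss St; rewrite -[- f t]mulN1r addrC -hf //.
by congr f; apply/funext => n; rewrite mulN1r addrC.
Qed.

Lemma lin_fin f : lin f -> forall L (v : nat -> R),
  (forall k, (L <= k)%N -> v k = 0) ->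
  f v = \sum_(k < L) v k * f (unit_vec R k).
Proof.
move=> hf; elim=> [|L IH] v hv.
  rewrite big_ord0 -(lin0 hf); congr f; apply/funext => n; exact: hv.
pose v' := fun k => if k == L then 0 else v k.
have hv' : forall k, (L <= k)%N -> v' k = 0.
  move=> k; rewrite leq_eqVlt => /orP[/eqP <-|hk]; rewrite /v'; first by rewrite eqxx.
  by case: eqP => // _; apply: hv.
have -> : v = (fun n => v L * unit_vec R L n + v' n).
  apply/funext => n; rewrite /v' /unit_vec; case: eqP => [->|_].
    by rewrite mulr1 addr0.
  by rewrite mulr0 add0r.
rewrite hf; [|exact: unit_vec_S|exact: finsupp_S hv'].
rewrite big_ord_recr /= (IH v') // addrC; congr (_ + _).
  by rewrite /unit_vec /v' eqxx mulr1 addr0.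
apply: eq_bigr => i _; rewrite /v' /unit_vec.
by rewrite (ltn_eqF (ltn_ord i)) mulr0 add0r.
Qed.


Definition bounded_op (f : (nat -> R) -> R) :=
  exists C, forall s, S s -> forall M, bnd s M -> `|f s| <= C * M.

Lemma bnd_ge0 s M : bnd s M -> 0 <= M.
Proof. by move=> h; apply: le_trans (h 0%N). Qed.

Lemma dual_l1 f : lin f -> bounded_op f ->
  exists C, 0 <= C /\ forall L, \sum_(k < L) `|f (unit_vec R k)| <= C.
Proof.
move=> hf [C hC]; exists C; split.
  have := hC _ S0 1 (fun _ => ltac:(by rewrite normr0)); by rewrite (lin0 hf) normr0 mulr1.
move=> L.
pose v := fun k => if (k < L)%N then Num.sg (f (unit_vec R k)) else 0.
have hv : forall k, (L <= k)%N -> v k = 0.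
  by move=> k hk; rewrite /v ltnNge hk.
have Sv := finsupp_S hv.
have bv : bnd v 1.
  move=> k; rewrite /v; case: ifP => _; last by rewrite normr0.
  by rewrite normr_sg; case: (_ != 0).
have := hC _ Sv 1 bv; rewrite mulr1 (lin_fin hf hv).
have -> : \sum_(k < L) v k * f (unit_vec R k) = \sum_(k < L) `|f (unit_vec R k)|.
  by apply: eq_bigr => i _; rewrite /v ltn_ord normrEsg.
by apply: le_trans; apply: ler_norm.
Qed.

Lemma pair_cvg f z B : lin f -> bounded_op f -> bnd z B ->
  cvgn (series (fun k => z k * f (unit_vec R k))).
Proof.
move=> hf hb hz; have [C [C0 hC]] := dual_l1 hf hb.
have B0 := bnd_ge0 hz.
apply: normed_cvg; apply: nondecreasing_is_cvgn.
  by apply: nondecreasing_series => n _ _; exact: normr_ge0.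
exists (B * C) => _ [n _ <-] /=.
rewrite /series /= big_mkord.
apply: le_trans (_ : \sum_(k < n) B * `|f (unit_vec R k)| <= _).
  by apply: ler_sum => i _; rewrite normrM ler_wpM2r.
by rewrite -mulr_sumr ler_wpM2l.
Qed.

Fixpoint Xseq (T : nat -> (nat -> R) -> R) (sw : nat -> nat -> R) (m : nat) : nat -> R :=
  if m is m'.+1 then
    let x := Xseq T sw m' in
    let y := fun k => 3^-1 ^+ m' * sw m' k in
    if `|T m' y| <= `|T m' (fun k => x k + y k)| then (fun k => x k + y k)
    else (fun k => x k - y k)
  else fun _ => 0.

Section XseqProps.
Variables (T : nat -> (nat -> R) -> R) (sw : nat -> nat -> R).
Hypothesis linT : forall m, lin (T m).
Hypothesis Ssw : forall m, S (sw m).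
Hypothesis bsw : forall m, bnd (sw m) 1.
Let X := Xseq T sw.
Local Notation r := (3^-1 : R).

Lemma r_ge0 : 0 <= r. Proof. by rewrite invr_ge0. Qed.
Lemma rX_ge0 m : 0 <= r ^+ m. Proof. exact: exprn_ge0 r_ge0. Qed.

Lemma X_S m : S (X m).
Proof.
elim: m => [|m IH] /=; first exact: S0.
have Sy : S (fun k => 3^-1 ^+ m * sw m k) by apply: Sscale.
rewrite /X /=. by case: ifP => _; [apply: Sadd|apply: Ssub].
Qed.

Lemma X_step m k : `|X m.+1 k - X m k| <= r ^+ m.
Proof.
rewrite /X /=; case: ifP => _ /=; rewrite addrAC subrr add0r ?normrN normrM;
  rewrite (ger0_norm (rX_ge0 _)) -[leRHS]mulr1; apply: ler_wpM2l;
  by [exact: rX_ge0|exact: bsw].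
Qed.

Lemma X_T m : r ^+ m * `|T m (sw m)| <= `|T m (X m.+1)|.
Proof.
have Sy : S (fun k => 3^-1 ^+ m * sw m k) by apply: Sscale.
have Ty : T m (fun k => 3^-1 ^+ m * sw m k) = r ^+ m * T m (sw m) by rewrite linZ.
have Ex : S (Xseq T sw m) := X_S m.
rewrite /X /=; case: ifP => h /=.
  by move: h; rewrite Ty normrM (ger0_norm (rX_ge0 _)).
move: h; rewrite (linB (linT m) Ex Sy) (linD (linT m) Ex Sy) Ty => /negbT.
rewrite -ltNge; set a := T m (Xseq T sw m); set b := r ^+ m * T m (sw m).
have nb : `|b| = r ^+ m * `|T m (sw m)| by rewrite normrM (ger0_norm (rX_ge0 _)).
rewrite -nb => h.
have := ler_normB (a + b) (a - b).
have -> : a + b - (a - b) = b *+ 2 by rewrite mulr2n; ring.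
rewrite normrMn mulr2n => h2.
lra.
Qed.

Lemma X_tail m d k : `|X (m + d) k - X m k| <= 3/2 * (r ^+ m - r ^+ (m + d)).
Proof.
elim: d => [|d IH]; first by rewrite addn0 subrr normr0 subrr mulr0.
rewrite addnS.
have E : X (m + d).+1 k - X m k = (X (m + d).+1 k - X (m + d) k) + (X (m + d) k - X m k).
  by rewrite addrA subrK.
rewrite E; apply: le_trans (ler_normD _ _) _.
have h1 := X_step (m + d) k.
rewrite exprSr; move: IH h1.
move: (`|X (m + d).+1 k - X (m + d) k|) (`|X (m + d) k - X m k|) => a b.
move: (3^-1 ^+ m : R) (3^-1 ^+ (m + d) : R) => p q; lra.
Qed.

Definition xl k := sup [set X m k - 3/2 * r ^+ m | m in setT].

Lemma X_ub k m m0 : X m k - 3/2 * r ^+ m <= X m0 k + 3/2 * r ^+ m0.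
Proof.
have p0 := rX_ge0 m; have p1 := rX_ge0 m0.
case: (leqP m0 m) => hm.
  have := X_tail m0 (m - m0) k; rewrite subnKC // ler_norml => /andP[h1 h2].
  move: h1 h2 p0 p1; move: (X m k) (X m0 k) (r ^+ m) (r ^+ m0) => a b p q; lra.
have := X_tail m (m0 - m) k; rewrite subnKC; last exact: ltnW.
rewrite ler_norml => /andP[h1 h2].
move: h1 h2 p0 p1; move: (X m k) (X m0 k) (r ^+ m) (r ^+ m0) => a b p q; lra.
Qed.

Lemma xl_near k m0 : `|xl k - X m0 k| <= 3/2 * r ^+ m0.
Proof.
set E := [set X m k - 3/2 * r ^+ m | m in setT].
have nE : E !=set0 by exists (X 0%N k - 3/2 * r ^+ 0); exists 0%N.
have hE : has_sup E.
  split => //; exists (X 0%N k + 3/2 * r ^+ 0) => _ [m _ <-]; exact: X_ub.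
rewrite ler_norml; apply/andP; split.
  have : X m0 k - 3/2 * r ^+ m0 <= xl k.
    by apply: sup_upper_bound => //; exists m0.
  move: (xl k) (X m0 k) (r ^+ m0) => a b p; lra.
have : xl k <= X m0 k + 3/2 * r ^+ m0.
  by apply: ge_sup => // _ [m _ <-]; exact: X_ub.
move: (xl k) (X m0 k) (r ^+ m0) => a b p; lra.
Qed.

End XseqProps.

Lemma rpow_le m : (3^-1 : R) ^+ m <= (m.+1%:R)^-1.
Proof.
rewrite exprVn lef_pV2 ?posrE ?exprn_gt0 ?ltr0n //.
by rewrite -natrX ler_nat; apply: ltn_expl.
Qed.

Lemma ubp (u : nat -> (nat -> R) -> R) :
  (forall n, lin (u n)) -> (forall n, bounded_op (u n)) ->
  (forall s, S s -> exists L, forall n, `|u n s| <= L) ->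
  exists K, 0 < K /\ forall n s, S s -> forall M, bnd s M -> `|u n s| <= K * M.
Proof.
move=> hl hb hp.
pose E n := [set `|u n s| | s in [set s | S s /\ bnd s 1]].
pose Nr n := sup (E n).
have b01 : bnd (fun _ => 0) 1 by move=> k; rewrite normr0 ler01.
have nE n : E n !=set0.
  by exists `|u n (fun _ => 0)|; exists (fun _ => 0) => //; split; [exact: S0|].
have hE n : has_sup (E n).
  split; first exact: nE.
  have [C hC] := hb n; exists C => _ [s [Ss bs] <-].
  by have := hC s Ss 1 bs; rewrite mulr1.
have Nr0 n : 0 <= Nr n.
  apply: le_trans (normr_ge0 (u n (fun _ => 0))) _.
  by apply: sup_upper_bound => //; exists (fun _ => 0) => //; split; [exact: S0|].
have Nrb n s M : S s -> bnd s M -> `|u n s| <= Nr n * M.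
  move=> Ss bs; have M0 := bnd_ge0 bs.
  case: (eqVneq M 0) => [M0'|Mn0].
    have -> : s = fun _ => 0.
      apply/funext => k; apply/eqP; rewrite -normr_le0 -M0'; exact: bs.
    by rewrite (lin0 (hl n)) normr0 M0' mulr0.
  have Mp : 0 < M by rewrite lt_def Mn0 M0.
  have Ss' : S (fun k => M^-1 * s k) by apply: Sscale.
  have bs' : bnd (fun k => M^-1 * s k) 1.
    move=> k; rewrite normrM ger0_norm ?invr_ge0 //.
    by rewrite ler_pdivrMl // mulr1.
  have : `|u n (fun k => M^-1 * s k)| <= Nr n.
    by apply: sup_upper_bound => //; exists (fun k => M^-1 * s k).
  rewrite (linZ _ (hl n) Ss) normrM ger0_norm ?invr_ge0 //.
  by move=> h; rewrite -ler_pdivrMr // mulrC.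
have Nra n e : 0 < e -> exists s, [/\ S s, bnd s 1 & Nr n - e < `|u n s|].
  move=> e0; have [_ [s [Ss bs] <-] h] := sup_adherent e0 (hE n).
  by exists s.
case: (pselect (exists K, forall n, Nr n <= K)) => [[K hK]|nb].
  exists (`|K| + 1); split; first by have := normr_ge0 K; lra.
  move=> n s Ss M bs; apply: le_trans (Nrb n s M Ss bs) _.
  apply: (ler_wpM2r (bnd_ge0 bs)); have := ler_norm K; have := hK n; lra.
exfalso.
have h K : exists n, K < Nr n.
  apply: contrapT => hK; apply: nb; exists K => n; rewrite leNgt; apply/negP => Hn.
  by apply: hK; exists n.
have [nn hnn] := choice (fun m => h (4 * 3 ^+ m * m.+1%:R)).
have N0 m : 0 < Nr (nn m).
  apply: lt_trans (hnn m); rewrite !mulr_gt0 ?exprn_gt0 ?ltr0n //.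
have [sw hsw] := choice (fun m => Nra (nn m) (Nr (nn m) / 4)
   (divr_gt0 (N0 m) (ltr0n _ 4))).
pose T m := u (nn m).
have linT m : lin (T m) by apply: hl.
have Ssw m : S (sw m) by case: (hsw m).
have bsw m : bnd (sw m) 1 by case: (hsw m).
pose x := xl T sw.
have Sx : S x.
  case: hS => _ _ _ hcl; apply: hcl.
    exists (3/2) => k; have := xl_near T bsw k 0; rewrite /= subr0 expr0 mulr1.
    by [].
  move=> e e0.
  pose m0 := Num.Def.trunc (3/2 / e).
  exists (Xseq T sw m0); first exact: (X_S T Ssw).
  move=> k; apply: le_trans (xl_near T bsw k m0) _.
  have h1 := rpow_le m0.
  have h2 : 3/2 / e < m0.+1%:R by apply: truncnS_gt.
  have h3 : 3/2 < m0.+1%:R * e by rewrite -ltr_pdivrMr.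
  have h4 : 3/2 * (m0.+1%:R)^-1 <= e.
    by rewrite ler_pdivrMr ?ltr0n //; lra.
  apply: le_trans h4; apply: (ler_wpM2l _ h1) => //.
have [L hL] := hp x Sx.
pose m := Num.Def.trunc L.
have hm : L < m.+1%:R by apply: truncnS_gt.
have SX := X_S T Ssw m.+1.
have Sd : S (fun k => x k - Xseq T sw m.+1 k) by apply: Ssub.
have Ex : u (nn m) x = T m (Xseq T sw m.+1) + T m (fun k => x k - Xseq T sw m.+1 k).
  rewrite -(linD (linT m) SX Sd); congr u; apply/funext => k; ring.
have hd : `|T m (fun k => x k - Xseq T sw m.+1 k)| <= Nr (nn m) * (3/2 * 3^-1 ^+ m.+1).
  apply: Nrb => // k; exact: xl_near.
have hX := X_T linT Ssw m.
have [_ _ hs] := hsw m.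
have q0 : 0 < (3^-1 : R) ^+ m by rewrite exprn_gt0 // invr_gt0.
have hq : (3^-1 : R) ^+ m * 3 ^+ m = 1 by rewrite -exprMn mulVf // expr1n.
have hs' : (3^-1 : R) ^+ m * (Nr (nn m) - Nr (nn m) / 4) <= 3^-1 ^+ m * `|T m (sw m)|.
  by apply: ler_wpM2l; [exact: ltW|exact: ltW].
have hn' : (3^-1 : R) ^+ m * (4 * 3 ^+ m * m.+1%:R) <= 3^-1 ^+ m * Nr (nn m).
  by apply: ler_wpM2l; [exact: ltW|exact: ltW].
have hLx := hL (nn m).
rewrite Ex in hLx.
have := ler_normB (T m (Xseq T sw m.+1) + T m (fun k => x k - Xseq T sw m.+1 k))
  (T m (fun k => x k - Xseq T sw m.+1 k)).
rewrite addrK => htri.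
rewrite exprSr in hd.
move: hLx htri hd hX hs' hn' hq hm q0.
move: (T m (Xseq T sw m.+1)) (T m (fun k => x k - Xseq T sw m.+1 k)) => A B.
move: (`|T m (sw m)|) (Nr (nn m)) ((3^-1 : R) ^+ m) ((3 : R) ^+ m) => ts N q t.
move: (m.+1%:R : R) => mm.
move=> h1 h2 h3 h4 h5 h6 h7 h8 h9.
have e1 : q * (4 * t * mm) = 4 * mm * (q * t) by ring.
rewrite e1 h7 mulr1 in h6.
lra.
Qed.

Lemma S_sum (NN : nat) (w : nat -> nat -> R) :
  (forall c, (c < NN)%N -> S (w c)) -> S (fun k => \sum_(c < NN) w c k).
Proof.
elim: NN => [|NN IH] hw.
  by apply: (Sext S0) => k; rewrite big_ord0.
have hw' : forall c, (c < NN)%N -> S (w c) by move=> c hc; apply: hw; apply: ltnW.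
apply: (Sext (Sadd (IH hw') (hw NN (ltnSn NN)))) => k /=.
by rewrite big_ord_recr.
Qed.

Lemma lin_sum f (NN : nat) (w : nat -> nat -> R) : lin f ->
  (forall c, (c < NN)%N -> S (w c)) ->
  f (fun k => \sum_(c < NN) w c k) = \sum_(c < NN) f (w c).
Proof.
move=> hf; elim: NN => [|NN IH] hw.
  rewrite big_ord0 (_ : (fun k => _) = (fun _ => 0)) ?(lin0 hf) //.
  by apply/funext => k; rewrite big_ord0.
have hw' : forall c, (c < NN)%N -> S (w c) by move=> c hc; apply: hw; apply: ltnW.
rewrite big_ord_recr /= -(IH hw') -(linD hf (S_sum hw') (hw NN (ltnSn NN))).
by congr f; apply/funext => k; rewrite big_ord_recr.
Qed.

End Basics.

Lemma inj_unbounded (g : nat -> nat) : injective g ->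
  forall a N0, exists t, (a <= t)%N /\ (N0 <= g t)%N.
Proof.
move=> ig a N0; apply: contrapT => hn.
have H : forall t, (g (a + t) < N0)%N.
  move=> t; rewrite ltnNge; apply/negP => h; apply: hn; exists (a + t).
  by rewrite leq_addr.
pose f := fun i : 'I_N0.+1 => Ordinal (H i).
have inf : injective f.
  move=> i1 i2 /(congr1 val) /= /ig /eqP; rewrite eqn_add2l => /eqP E.
  by apply: val_inj.
by have := @leq_card _ _ f inf; rewrite !card_ord ltnn.
Qed.

Lemma cantor (h : (nat -> bool) -> nat) : exists b b', b <> b' /\ h b = h b'.
Proof.
apply: contrapT => hn.
have ih : injective h.
  move=> b b' E; apply: contrapT => ne; apply: hn; by exists b, b'.
have hex n : exists b, (exists b', h b' = n) -> h b = n.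
  case: (pselect (exists b', h b' = n)) => [[b' e]|ne]; first by exists b'.
  by exists (fun _ => false) => hh; case: ne.
have [g hg] := choice hex.
pose d := fun n => ~~ g n n.
have e : g (h d) = d by apply: ih; apply: hg; exists d.
have := congr1 (fun f => f (h d)) e; rewrite /d /=.
by case: (g _ _).
Qed.

Section Hump.
Variable R : realType.
Variables (a : nat -> nat -> R) (z : nat -> R) (B eps gam : R) (V : nat -> R).
Hypothesis ha : forall k e, 0 < e -> exists N, forall n, (N <= n)%N -> `|a n k| < e.
Hypothesis hV : forall n, series (fun k => z k * a n k) @ \oo --> V n.
Hypothesis hbig : forall N, exists n, (N <= n)%N /\ eps <= `|V n|.
Hypothesis hz : forall k, `|z k| <= B.
Hypothesis eps0 : 0 < eps.
Hypothesis gam0 : 0 < gam.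

Lemma fin_small q e : 0 < e -> exists N, forall n, (N <= n)%N ->
  \sum_(k < q) `|a n k| <= e.
Proof.
elim: q e => [|q IH] e e0.
  by exists 0%N => n _; rewrite big_ord0 ltW.
have [N1 h1] := IH (e / 2) (divr_gt0 e0 (ltr0n _ 2)).
have [N2 h2] := ha q (divr_gt0 e0 (ltr0n _ 2)).
exists (maxn N1 N2) => n; rewrite geq_max => /andP[n1 n2].
rewrite big_ord_recr /=.
have := h1 n n1; have := h2 n n2; move: (\sum_(i < q) _) (`|a n q|) => x y.
lra.
Qed.

Lemma hump_step m q : exists nq : nat * nat, [/\ (m < nq.1)%N, (q < nq.2)%N,
  \sum_(k < q) `|a nq.1 k| <= gam &
  3 * eps / 4 - B * gam <=
    `|\sum_(k < nq.2) (if (q <= k)%N && (k < nq.2)%N then z k else 0) * a nq.1 k| ].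
Proof.
have [N1 h1] := fin_small q gam0.
have [n [hn hVn]] := hbig (maxn N1 m.+1).
move: hn; rewrite geq_max => /andP[n1 n2].
have [N2 _ h2] : \forall t \near \oo,
    `|V n - series (fun k => z k * a n k) t| < eps / 4.
  by move: (@hV n) => /cvgrPdist_lt; apply; apply: divr_gt0.
pose q' := maxn N2 q.+1.
exists (n, q'); split => //=.
- by rewrite leq_max ltnSn orbT.
- exact: h1.
have hq' : (q <= q')%N by rewrite leq_max leqnSn orbT.
have e2 := h2 q' (leq_maxl _ _).
rewrite /= /series /= big_mkord in e2.
have split : \sum_(k < q') z k * a n k =
   \sum_(k < q') (if (q <= k)%N && (k < q')%N then z k else 0) * a n k
   + \sum_(k < q) z k * a n k.
  rewrite (big_ord_widen _ (fun k => z k * a n k) hq') [X in _ + X]big_mkcond -big_split /=.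
  apply: eq_bigr => k _; rewrite ltn_ord andbT.
  by case: leqP => _; rewrite ?mul0r ?add0r ?addr0.
have hsmall : `|\sum_(k < q) z k * a n k| <= B * gam.
  apply: le_trans (ler_norm_sum _ _ _) _.
  apply: le_trans (_ : \sum_(k < q) B * `|a n k| <= _).
    apply: ler_sum => k _; rewrite normrM; apply: ler_wpM2r => //.
  rewrite -mulr_sumr; apply: ler_wpM2l; last exact: h1.
  by apply: le_trans (hz 0%N).
rewrite split in e2.
move: e2 hsmall hVn.
move: (\sum_(k < q') _) (\sum_(k < q) _) (V n) => X Y W e2 hsmall hVn.
have t1 := ler_normD (W - (X + Y)) (X + Y); rewrite subrK in t1.
have t2 := ler_normD X Y.
move: e2 hsmall hVn t1 t2.
move: (`|W - (X + Y)|) (`|X + Y|) => Z1 Z2.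
lra.
Qed.

End Hump.

Section HumpSeq.
Variable g : nat * nat -> nat * nat.
Fixpoint st i := if i is i'.+1 then g (st i') else g (0%N, 0%N).
Definition prv i := if i is i'.+1 then st i' else (0%N, 0%N).
Definition pp i := (prv i).2.
Definition nI i := (st i).1.
Lemma st_prv i : st i = g (prv i). Proof. by case: i. Qed.
Hypothesis hg1 : forall mq, (mq.1 < (g mq).1)%N.
Hypothesis hg2 : forall mq, (mq.2 < (g mq).2)%N.

Lemma pp_inc i : (pp i < pp i.+1)%N.
Proof. by rewrite /pp /= st_prv. Qed.
Lemma nI_inc i : (nI i < nI i.+1)%N.
Proof. by rewrite /nI /=. Qed.
Lemma nI_ge i : (i <= nI i)%N.
Proof. elim: i => // i IH; exact: leq_ltn_trans IH (nI_inc i). Qed.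
Lemma pp_lt i i' : (i < i')%N -> (pp i < pp i')%N.
Proof. exact: (homo_ltn ltn_trans pp_inc). Qed.
Lemma pp_le i i' : (i <= i')%N -> (pp i <= pp i')%N.
Proof. exact: (homo_leq leqnn leq_trans (fun i => ltnW (pp_inc i))). Qed.
Lemma nI_lt i i' : (i < i')%N -> (nI i < nI i')%N.
Proof. exact: (homo_ltn ltn_trans nI_inc). Qed.

Definition inF k i := (pp i <= k)%N && (k < pp i.+1)%N.

Lemma inF_uniq k i i' : inF k i -> inF k i' -> i = i'.
Proof.
move=> /andP[a1 a2] /andP[b1 b2].
case: (ltngtP i i') => // h.
  by have := pp_le h; move=> h'; have := leq_trans a2 (leq_trans h' b1); rewrite ltnn.
by have := pp_le h; move=> h'; have := leq_trans b2 (leq_trans h' a1); rewrite ltnn.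
Qed.

Lemma inF_ge k i j : (pp j <= k)%N -> inF k i -> (j <= i)%N.
Proof.
move=> hj /andP[a1 a2]; rewrite leqNgt; apply/negP => h.
by have := leq_trans a2 (leq_trans (pp_le h) hj); rewrite ltnn.
Qed.
End HumpSeq.

Section Rosen.
Variable R : realType.
Variable S : set (nat -> R).
Hypothesis hS : closed_subspace_linf S.
Hypothesis hc0 : forall x, c0 x -> S x.
Variable u : nat -> (nat -> R) -> R.
Hypothesis linU : forall n, lin S (u n).
Variable K : R.
Hypothesis hK : forall n s, S s -> forall M, bnd s M -> `|u n s| <= K * M.
Variable g : nat * nat -> nat * nat.
Hypothesis hg1 : forall mq, (mq.1 < (g mq).1)%N.
Hypothesis hg2 : forall mq, (mq.2 < (g mq).2)%N.
Variables (B' eta delta : R) (NN : nat).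
Hypothesis eta0 : 0 <= eta.
Hypothesis NN0 : (0 < NN)%N.
Hypothesis hpar : K * (B' + NN%:R * eta) < NN%:R * delta.

Definition good j (Q : nat -> Prop) := forall s, S s -> bnd s B' ->
  (forall k, (forall i, inF g k i -> ~ Q i) -> `|s k| <= eta) ->
  `|u (nI g j) s| <= delta.

Definition piece (phi : nat -> nat) c t := phi (NN * t + c).+1.
Definition Qp phi c i := exists t, piece phi c t = i.

Lemma piece_disj phi : injective phi -> forall c c' i, (c < NN)%N -> (c' < NN)%N ->
  Qp phi c i -> Qp phi c' i -> c = c'.
Proof.
move=> iphi c c' i hc hc' [t e] [t' e']; rewrite -e' in e.
move/iphi: e => /eqP; rewrite eqSS => /eqP e.
have := congr1 (fun x => x %% NN)%N e; rewrite /=.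
by rewrite mulnC modnMDl mulnC modnMDl !modn_small.
Qed.

Lemma piece_good j phi : injective phi -> exists c, (c < NN)%N /\ good j (Qp phi c).
Proof.
move=> iphi; apply: contrapT => hn.
have hw : forall c, exists s, (c < NN)%N -> [/\ S s, bnd s B',
    (forall k, (forall i, inF g k i -> ~ Qp phi c i) -> `|s k| <= eta) &
    delta < `|u (nI g j) s|].
  move=> c; case: (ltnP c NN) => hc; last first.
    by exists (fun _ => 0).
  apply: contrapT => hs; apply: hn; exists c; split => // s Ss bs sup.
  rewrite leNgt; apply/negP => hlt; apply: hs; exists s => _; by split.
have [sw hsw] := choice hw.
pose U := u (nI g j).
pose w c := fun k => Num.sg (U (sw c)) * sw c k.
have Sw : forall c, (c < NN)%N -> S (w c).
  by move=> c hc; apply: Sscale; case: (hsw c hc).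
pose s := fun k => \sum_(c < NN) w c k.
have Ss : S s := S_sum hS Sw.
have Us : U s = \sum_(c < NN) `|U (sw c)|.
  rewrite /U (lin_sum hS (linU _) Sw); apply: eq_bigr => c _.
  rewrite /w (linZ hS _ (linU _)); last by case: (hsw c (ltn_ord c)).
  by rewrite -normrEsg.
have lower : NN%:R * delta <= U s.
  rewrite Us; apply: le_trans (_ : \sum_(c < NN) delta <= _).
    by rewrite sumr_const card_ord mulr_natl.
  by apply: ler_sum => c _; case: (hsw c (ltn_ord c)) => _ _ _ /ltW.
have bs : bnd s (B' + NN%:R * eta).
  move=> k.
  have [c0 hc0'] : exists c0 : 'I_NN, forall c : 'I_NN, c = c0 \/
      (forall i, inF g k i -> ~ Qp phi c i).
    case: (pselect (exists c0 : 'I_NN, exists i, inF g k i /\ Qp phi c0 i)).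
      move=> [c0 [i0 [hi0 hq0]]]; exists c0 => c.
      case: (eqVneq c c0) => [->|ne]; [by left|right] => i hi hq.
      have ei := inF_uniq hg2 hi hi0; rewrite ei in hq.
      by move/eqP: ne; apply; apply: val_inj; apply: (piece_disj iphi _ _ hq hq0).
    move=> hno; exists (Ordinal NN0) => c; right => i hi hq.
    by apply: hno; exists c, i.
  rewrite /s; apply: le_trans (ler_norm_sum _ _ _) _.
  apply: le_trans (_ : \sum_(c < NN) ((if c == c0 then B' else 0) + eta) <= _).
    apply: ler_sum => c _; rewrite /w normrM.
    have hsg : `|Num.sg (U (sw c))| <= 1 by rewrite normr_sg; case: (_ != 0).
    case: (hsw c (ltn_ord c)) => _ bc sc _.
    apply: le_trans (_ : 1 * `|sw c k| <= _).
      by apply: ler_wpM2r => //.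
    rewrite mul1r; case: (hc0' c) => [E|hc].
      by rewrite E eqxx -E; apply: le_trans (bc k) _; rewrite lerDl.
    case: eqP => [E|_]; first by apply: le_trans (bc k) _; rewrite lerDl.
    by rewrite add0r; apply: sc.
  rewrite big_split /= -big_mkcond big_pred1_eq sumr_const card_ord mulr_natl.
  done.
have := hK (nI g j) Ss bs; rewrite -/U => hu.
have := ler_norm (U s); move: lower hu hpar.
move: (U s) (`|U s|) => x y; lra.
Qed.

End Rosen.

Section RosenSeq.
Variable NN : nat.
Hypothesis NN0 : (0 < NN)%N.
Variable cf : (nat -> nat) -> nat.
Fixpoint Phi k : nat -> nat :=
  if k is k'.+1 then piece NN (Phi k') (cf (Phi k')) else id.
Definition J k := Phi k 0.

Lemma Phi_inc k a b : (a < b)%N -> (Phi k a < Phi k b)%N.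
Proof.
elim: k a b => [//|k IH] a b hab /=; rewrite /piece; apply: IH.
by rewrite ltnS ltn_add2r ltn_pmul2l.
Qed.

Lemma Phi_inj k : injective (Phi k).
Proof.
move=> a b E; case: (ltngtP a b) => // h; have := Phi_inc k h; by rewrite E ltnn.
Qed.

Lemma J_inc k : (J k < J k.+1)%N.
Proof. by rewrite /J /= /piece; apply: Phi_inc. Qed.

Lemma J_lt k l : (k < l)%N -> (J k < J l)%N.
Proof. exact: (homo_ltn ltn_trans J_inc). Qed.

Lemma J_lt_inv k l : (J k < J l)%N -> (k < l)%N.
Proof.
move=> h; rewrite ltnNge; apply/negP => hl.
have := (homo_leq leqnn leq_trans (fun i => ltnW (J_inc i))) _ _ hl.
by rewrite leqNgt h.
Qed.

Lemma J_inj : injective J.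
Proof.
move=> a b E; case: (ltngtP a b) => // h; have := J_lt h; by rewrite E ltnn.
Qed.

Lemma J_ge l : (l <= J l)%N.
Proof. elim: l => // l IH; exact: leq_ltn_trans IH (J_inc l). Qed.

Lemma Phi_range k d t : exists t', Phi (k.+1 + d) t = Phi k.+1 t'.
Proof.
elim: d t => [|d IH] t; first by exists t; rewrite addn0.
rewrite addnS /= /piece; exact: IH.
Qed.

Lemma J_in k l : (k < l)%N -> Qp NN (Phi k) (cf (Phi k)) (J l).
Proof.
move=> hkl; have [t' e] := Phi_range k (l - k.+1) 0.
by exists t'; rewrite subnKC in e => //; rewrite /J -e.
Qed.

End RosenSeq.

Section Final.
Variable R : realType.
Variable S : set (nat -> R).
Hypothesis hS : closed_subspace_linf S.
Hypothesis hc0 : forall x, c0 x -> S x.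
Hypothesis hq : quotient_separable S.
Variable u : nat -> (nat -> R) -> R.
Hypothesis linU : forall n, lin S (u n).
Variable K : R.
Hypothesis K0 : 0 < K.
Hypothesis hK : forall n s, S s -> forall M, bnd s M -> `|u n s| <= K * M.
Hypothesis hu0 : forall s, S s -> (fun n => u n s) @ \oo --> (0 : R).
Variable z : nat -> R.
Variable B : R.
Hypothesis B0 : 0 < B.
Hypothesis hz : forall k, `|z k| <= B.

Lemma phillips eps : 0 < eps -> exists N, forall n, (N <= n)%N ->
  `|limn (series (fun k => z k * u n (unit_vec R k)))| < eps.
Proof.
move=> e0; have B0' := B0; have K0' := K0.
apply: contrapT => hn.
pose a n k := u n (unit_vec R k).
pose V n := limn (series (fun k => z k * a n k)).
have hbig : forall N, exists n, (N <= n)%N /\ eps <= `|V n|.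
  move=> N; apply: contrapT => h; apply: hn; exists N => n hNn.
  rewrite ltNge; apply/negP => h'; apply: h; by exists n.
have bop : forall n, bounded_op S (u n) by move=> n; exists K; apply: hK.
have hV : forall n, series (fun k => z k * a n k) @ \oo --> V n.
  by move=> n; apply: (pair_cvg hS hc0 (linU n) (bop n) hz).
have ha : forall k e, 0 < e -> exists N, forall n, (N <= n)%N -> `|a n k| < e.
  move=> k e e0'.
  have [N _ hN] : \forall n \near \oo, `|0 - a n k| < e.
    by move: (hu0 (unit_vec_S hc0 k)) => /cvgrPdist_lt; apply.
  by exists N => n hNn; have := hN n hNn; rewrite sub0r normrN.
pose gam := eps / (4 * (2 * B + 1)).
have gam0 : 0 < gam.
  apply: divr_gt0 => //; apply: mulr_gt0 => //; lra.
have hgam : gam * (2 * B + 1) = eps / 4.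
  rewrite /gam; field; lra.
have step := hump_step ha hV hbig hz e0 gam0.
have [g hg] := choice (fun mq : nat * nat => step mq.1 mq.2).
have hg1 : forall mq, (mq.1 < (g mq).1)%N by move=> mq; case: (hg mq).
have hg2 : forall mq, (mq.2 < (g mq).2)%N by move=> mq; case: (hg mq).
have P3 : forall i, \sum_(k < pp g i) `|a (nI g i) k| <= gam.
  by move=> i; rewrite /nI st_prv; case: (hg (prv g i)).
have P4 : forall i, 3 * eps / 4 - B * gam <= `|\sum_(k < pp g i.+1)
    (if (pp g i <= k)%N && (k < pp g i.+1)%N then z k else 0) * a (nI g i) k|.
  by move=> i; rewrite /nI /pp /= st_prv; case: (hg (prv g i)).
pose delta := eps / 4.
pose B' := 2 * B + 2.
pose eta := Num.min 1 (delta / (4 * K)).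
have eta0 : 0 < eta.
  rewrite /eta lt_min ltr01 /=; apply: divr_gt0; rewrite /delta; lra.
have eta1 : eta <= 1 by rewrite /eta ge_min lexx.
have eta2 : K * eta <= delta / 4.
  have : eta <= delta / (4 * K) by rewrite /eta ge_min lexx orbT.
  rewrite ler_pdivlMr; last lra.
  by move=> h; rewrite mulrC; lra.
pose NN := (Num.Def.trunc (4 * K * B' / delta)).+1.
have NN0 : (0 < NN)%N by [].
have hNN : 4 * K * B' / delta < NN%:R by apply: truncnS_gt.
have hpar : K * (B' + NN%:R * eta) < NN%:R * delta.
  have d0 : 0 < delta by rewrite /delta; lra.
  have h1 : 4 * K * B' < NN%:R * delta by rewrite -ltr_pdivrMr.
  have h2 : NN%:R * (K * eta) <= NN%:R * (delta / 4) by apply: ler_wpM2l.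
  move: h1 h2; move: (NN%:R : R) => nn; rewrite /B'; nra.
have hgood : forall phi : nat -> nat, exists c, injective phi ->
    (c < NN)%N /\ good S u g B' eta delta (phi 0%N) (Qp NN phi c).
  move=> phi; case: (pselect (injective phi)) => iphi; last by exists 0%N.
  have [c hc] := piece_good hS linU hK hg2 (ltW eta0) NN0 hpar (phi 0%N) iphi.
  by exists c.
have [cf hcf] := choice hgood.
have hgd : forall k, good S u g B' eta delta (J NN cf k) (Qp NN (Phi NN cf k) (cf (Phi NN cf k))).
  by move=> k; case: (hcf (Phi NN cf k) (Phi_inj (cf:=cf) (k:=k) NN0)).
pose code (b : nat -> bool) t := pickle (mkseq b t).
pose Pb (b : nat -> bool) i := exists t, J NN cf (code b t) = i.
pose wb (b : nat -> bool) k := if `[< exists i, inF g k i /\ Pb b i >] then z k else 0.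
have wbB : forall b k, `|wb b k| <= B.
  by move=> b k; rewrite /wb; case: ifP => _; rewrite ?normr0 ?hz //; apply: ltW.
have Wb : forall b b' k, `|wb b k - wb b' k| <= B.
  move=> b b' k; rewrite /wb; case: ifP => _; case: ifP => _;
  rewrite ?subrr ?normr0 ?subr0 ?sub0r ?normrN ?hz //; exact: ltW.
have [D [cD [DL hD]]] := hq.
have hds : forall b, exists ds : (nat -> R) * (nat -> R), [/\ D ds.1, S ds.2 &
    forall n, `|wb b n - ds.1 n - ds.2 n| <= eta / 2].
  move=> b; have lb : linf (wb b) by exists B => k; exact: wbB.
  have e2 : 0 < eta / 2 by lra.
  have [d [Dd [s' Ss' hs']]] := hD (wb b) lb (eta / 2) e2.
  by exists (d, s').
have [ds hds'] := choice hds.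
have /countable_injP [f hf] := cD.
have [b [b' [nbb hbb]]] := cantor (fun b => f (ds b).1).
have edd : (ds b).1 = (ds b').1.
  apply: hf => //; rewrite inE; by case: (hds' b); case: (hds' b').
have [Dd1 Ss1 h1] := hds' b.
have [Dd2 Ss2 h2] := hds' b'.
pose s := fun k => (ds b).2 k - (ds b').2 k.
have Ss : S s by apply: Ssub.
have hW : forall k, `|wb b k - wb b' k - s k| <= eta.
  move=> k; have := h1 k; have := h2 k; rewrite -edd /s.
  have E : wb b k - wb b' k - ((ds b).2 k - (ds b').2 k) =
    (wb b k - (ds b).1 k - (ds b).2 k) - (wb b' k - (ds b).1 k - (ds b').2 k) by ring.
  rewrite E => hb2 hb1; apply: le_trans (ler_normB _ _) _; lra.
have [d0 hd0] : exists d0, b d0 <> b' d0.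
  apply: contrapT => hn'; apply: nbb; apply/funext => k.
  by apply: contrapT => hk; apply: hn'; exists k.
have code_inj : forall bb t t', code bb t = code bb t' -> t = t'.
  move=> bb t t' /(pcan_inj pickleK) /(congr1 size); by rewrite !size_mkseq.
have excl : forall t, (d0 < t)%N -> ~ Pb b' (J NN cf (code b t)).
  move=> t ht [t' e]; have e1 := J_inj (cf:=cf) NN0 e.
  have e' : mkseq b' t' = mkseq b t by apply: (pcan_inj pickleK).
  have ett : t' = t by have := congr1 size e'; rewrite !size_mkseq.
  rewrite ett in e'; have := congr1 (fun l => nth false l d0) e'.
  by rewrite !nth_mkseq // => /esym.
have [N0 _ hN0] : \forall n \near \oo, `|0 - u n s| < eps / 4.
  by move: (hu0 Ss) => /cvgrPdist_lt; apply; lra.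
have [t [ht hNt]] := inj_unbounded (code_inj b) d0.+1 N0.
pose kk := code b t.
pose j := J NN cf kk.
pose n := nI g j.
have hn0 : `|u n s| < eps / 4.
  have := hN0 n; rewrite sub0r normrN; apply.
  apply: leq_trans hNt _; apply: leq_trans (J_ge NN0 cf kk) _; exact: nI_ge.
have Pbj : Pb b j by exists t.
have nPbj : ~ Pb b' j by apply: excl.
pose bf := fun k => if (pp g j <= k)%N && (k < pp g j.+1)%N then z k else 0.
pose ef := fun k => if (k < pp g j)%N then s k else 0.
pose s' := fun k => s k - bf k - ef k.
have Sbf : S bf.
  apply: (finsupp_S hc0 (L := pp g j.+1)) => k hk.
  by rewrite /bf ltnNge hk andbF.
have Sef : S ef.
  by apply: (finsupp_S hc0 (L := pp g j)) => k hk; rewrite /ef ltnNge hk.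
have Ss' : S s' by apply: Ssub => //; apply: Ssub.
have dec : u n s = u n bf + (u n ef + u n s').
  rewrite -(linD (linU n) Sef Ss') -(linD (linU n) Sbf (Sadd hS Sef Ss')).
  by congr (u n); apply/funext => k; rewrite /s'; ring.
have ubf : 3 * eps / 4 - B * gam <= `|u n bf|.
  rewrite (lin_fin hS hc0 (linU n) (L := pp g j.+1)); last first.
    by move=> k hk; rewrite /bf ltnNge hk andbF.
  exact: P4.
have sB : forall k, `|s k| <= B + eta.
  move=> k; have := hW k; have := Wb b b' k.
  move: (wb b k - wb b' k) (s k) => x y h1' h2'.
  have := ler_normB x (x - y).
  have -> : x - (x - y) = y by ring.
  lra.
have uef : `|u n ef| <= (B + 1) * gam.
  rewrite (lin_fin hS hc0 (linU n) (L := pp g j)); last first.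
    by move=> k hk; rewrite /ef ltnNge hk.
  apply: le_trans (ler_norm_sum _ _ _) _.
  apply: le_trans (_ : \sum_(k < pp g j) (B + 1) * `|a n k| <= _).
    apply: ler_sum => k _; rewrite /ef ltn_ord normrM; apply: ler_wpM2r => //.
    by apply: le_trans (sB k) _; lra.
  rewrite -mulr_sumr; apply: ler_wpM2l; first lra.
  exact: P3.
have nz : forall bb k i, (pp g j <= k)%N -> ~~ (k < pp g j.+1)%N ->
    (forall i, inF g k i -> ~ Qp NN (Phi NN cf kk) (cf (Phi NN cf kk)) i) ->
    inF g k i -> Pb bb i -> False.
  move=> bb k i hkj hk2 hk hi [tt e].
  have ji : (j <= i)%N by apply: (inF_ge hg2 hkj hi).
  have jni : j != i.
    apply/eqP => eji; move: hi; rewrite -eji /inF hkj /=; by apply/negP.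
  have jlt : (j < i)%N by rewrite ltn_neqAle jni ji.
  rewrite -e in jlt; have := J_lt_inv NN0 jlt => hl.
  by apply: (hk i hi); rewrite -e; apply: J_in.
have us' : `|u n s'| <= delta.
  apply: (hgd kk) => //.
    move=> k; rewrite /s' /bf /ef; case: (ltnP k (pp g j)) => hk.
      by rewrite /= subr0 subrr normr0 /B'; lra.
    rewrite /= subr0; apply: le_trans (ler_normB _ _) _.
    have := sB k; case: ifP => _; rewrite ?normr0; have := hz k; rewrite /B'; lra.
  move=> k hk; rewrite /s' /bf /ef; case: (ltnP k (pp g j)) => hkj.
    by rewrite /= subr0 subrr normr0; apply: ltW.
  rewrite /= subr0; case: (boolP (k < pp g j.+1)%N) => hk2.
    have hinj : inF g k j by rewrite /inF hkj hk2.
    have w1 : wb b k = z k by rewrite /wb asboolT //; exists j; split.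
    have w2 : wb b' k = 0.
      rewrite /wb asboolF //; move=> [i [hi hPi]].
      by have ei := inF_uniq hg2 hi hinj; rewrite ei in hPi; apply: nPbj.
    have := hW k; rewrite w1 w2 subr0 distrC //.
  have w1 : wb b k = 0 by rewrite /wb asboolF // => -[i [hi hPi]]; apply: (nz b k i).
  have w2 : wb b' k = 0 by rewrite /wb asboolF // => -[i [hi hPi]]; apply: (nz b' k i).
  by have := hW k; rewrite w1 w2 subr0 sub0r normrN subr0.
move: hn0; rewrite dec.
have t1 := ler_normD (u n ef) (u n s').
have t2 := ler_normB (u n bf + (u n ef + u n s')) (u n ef + u n s').
have e3 : u n bf + (u n ef + u n s') - (u n ef + u n s') = u n bf by ring.
rewrite e3 in t2.
move: t2 t1 ubf uef us' hgam; rewrite /delta.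
move: (u n bf) (u n ef) (u n s') => x1 x2 x3.
move: (`|x1 + (x2 + x3)|) (`|x2 + x3|) => y1 y2.
move=> t2 t1 ubf uef us' hgam hn0.
lra.
Qed.
End Final.

Theorem corollary3p2 (R : realType) (S : set (nat -> R)) :
  closed_subspace_linf S -> (forall x, c0 x -> S x) -> quotient_separable S ->
  linf_grothendieck S.
Proof.
move=> hS hc0 hq; split => //; split => // xs x hxs hx hw z hz.
have linxs : forall n, lin S (xs n).
  by move=> n a s t Ss St; case: (hxs n) => h _; apply: h.
have linx : lin S x by move=> a s t Ss St; case: hx => h _; apply: h.
have bopxs : forall n, bounded_op S (xs n).
  by move=> n; case: (hxs n) => _ [C hC]; exists C.
have bopx : bounded_op S x by case: hx => _ [C hC]; exists C.
pose u n s := xs n s - x s.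
have linU : forall n, lin S (u n).
  move=> n a s t Ss St; rewrite /u (linxs n a s t Ss St) (linx a s t Ss St); ring.
have bopU : forall n, bounded_op S (u n).
  move=> n; have [C1 h1] := bopxs n; have [C2 h2] := bopx.
  exists (C1 + C2) => s Ss M bs; rewrite /u.
  apply: le_trans (ler_normB _ _) _.
  have := h1 s Ss M bs; have := h2 s Ss M bs; move=> a1 a2.
  by rewrite mulrDl; apply: lerD.
have hu0 : forall s, S s -> (fun n => u n s) @ \oo --> (0 : R).
  move=> s Ss; rewrite /u.
  rewrite -(subrr (x s)); apply: cvgB; [exact: hw|exact: cvg_cst].
have hub : forall s, S s -> exists L, forall n, `|u n s| <= L.
  move=> s Ss; have : cvgn (fun n => u n s) by apply/cvg_ex; exists 0; apply: hu0.
  move=> /cvg_has_ub [L hL]; exists L => n; apply: hL; by exists n.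
have [K [K0 hK]] := ubp hS linU bopU hub.
have [Bz hBz] := hz.
pose B := `|Bz| + 1.
have B0 : 0 < B by rewrite /B; have := normr_ge0 Bz; lra.
have hz' : forall k, `|z k| <= B.
  move=> k; apply: le_trans (hBz k) _; rewrite /B; have := ler_norm Bz; lra.
apply/cvgrPdist_lt => e e0.
have [N hN] := phillips hS hc0 hq linU K0 hK hu0 B0 hz' e0.
exists N => // n hn /=.
have c1 := pair_cvg hS hc0 (linxs n) (bopxs n) hz'.
have c2 := pair_cvg hS hc0 linx bopx hz'.
have E : pair_linf z (xs n) - pair_linf z x =
    limn (series (fun k => z k * u n (unit_vec R k))).
  rewrite /pair_linf -lim_seriesB //; congr (limn (series _)).
  by apply/funext => k; rewrite /u /= mulrBr.
by rewrite distrC E; apply: hN.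
Unshelve. all: by end_near.
Qed.
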